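(* Assume the setting and algorithm described in the context. If $0<\alpha\le\frac{\sqrt n}{\sqrt{8m}\,L}$, then for all $k\ge0$, almost surely, $$\mathbb E\big[\|g^{k+1}-\nabla\mathbf f(x^{k+1})\|^2\,|\,\mathcal F^k\big]\le 8.5L^2\|x^k-Jx^k\|^2+4nL^2t^k+6n\alpha^2L^2\|\overline{\nabla\mathbf f}(x^k)\|^2+4\alpha^2L^2\,\mathbb E\big[\|y^{k+1}-Jy^{k+1}\|^2\,|\,\mathcal F^k\big].$$
   Context: Setting. Let $n,m,p\ge1$ be integers and $\mathcal V=\{1,\dots,n\}$. For each $i\in\mathcal V$ and $j\in\{1,\dots,m\}$, $f_{i,j}:\mathbb R^p\to\mathbb R$ is differentiable and $L$-smooth for some $L>0$, i.e. $\|\nabla f_{i,j}(x)-\nabla f_{i,j}(y)\|\le L\|x-y\|$ for all $x,y\in\mathbb R^p$. Let $f_i:=\frac1m\sum_{j=1}^m f_{i,j}$ and $F:=\frac1n\sum_{i=1}^n f_i$, and assume $F^*:=\inf_{x\in\mathbb R^p}F(x)>-\infty$. Let $\underline W=(\underline w_{ir})\in\mathbb R^{n\times n}$ be a nonnegative, primitive, doubly stochastic matrix ($\underline W\mathbf 1_n=\mathbf 1_n$, $\mathbf 1_n^\top\underline W=\mathbf 1_n^\top$), and let $\lambda\in[0,1)$ be its second largest singular value. Any expression with $\lambda$ in a denominator is read as $+\infty$ when $\lambda=0$. Algorithm GT-SAGA with step-size $\alpha>0$: fix a deterministic $\bar x^0\in\mathbb R^p$; for all $i\in\mathcal V$ set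 $x_i^0=\bar x^0$, $z_{i,j}^0=x_i^0$ for all $j$, $y_i^0=0$, $g_i^{-1}=0$. For $k=0,1,2,\dots$ and every $i\in\mathcal V$: draw $\tau_i^k$ uniformly from $\{1,\dots,m\}$; set $g_i^k=\nabla f_{i,\tau_i^k}(x_i^k)-\nabla f_{i,\tau_i^k}(z_{i,\tau_i^k}^k)+\frac1m\sum_{j=1}^m\nabla f_{i,j}(z_{i,j}^k)$; set $y_i^{k+1}=\sum_{r=1}^n\underline w_{ir}(y_r^k+g_r^k-g_r^{k-1})$; set $x_i^{k+1}=\sum_{r=1}^n\underline w_{ir}(x_r^k-\alpha y_r^{k+1})$; draw $s_i^k$ uniformly from $\{1,\dots,m\}$; set $z_{i,j}^{k+1}=x_i^k$ if $j=s_i^k$ and $z_{i,j}^{k+1}=z_{i,j}^k$ otherwise. The family $\{\tau_i^k,s_i^k: i\in\mathcal V,k\ge0\}$ is independent. Notation. $x^k,y^k,g^k\in\mathbb R^{np}$ stack the $x_i^k$, $y_i^k$, $g_i^k$; $\nabla\mathbf f(x^k)\in\mathbb R^{np}$ stacks $\nabla f_i(x_i^k)$, $i=1,\dots,n$; $W=\underline W\otimes I_p$, $J=(\frac1n\mathbf 1_n\mathbf 1_n^\top)\otimes I_p$; $\bar x^k=\frac1n\sum_i x_i^k$, $\bar g^k=\frac1n\sum_i g_i^k$, $\overline{\nabla\mathbf f}(x^k)=\frac1n\sum_i\nabla f_i(x_i^k)$. $\mathcal F^0$ is the trivial $\sigma$-algebra and $\mathcal F^k=\sigma(\{\tau_i^t,s_i^t:i\in\mathcal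 V,\ t\le k-1\})$ for $k\ge1$. $t^k:=\frac1n\sum_{i=1}^n\frac1m\sum_{j=1}^m\|\bar x^k-z_{i,j}^k\|^2$. $\|\nabla\mathbf f(x^0)\|^2:=\sum_{i=1}^n\|\nabla f_i(\bar x^0)\|^2$. Norms are Euclidean (spectral for matrices); vector and matrix inequalities are entrywise. *)

(* Defs.v *)
From HB Require Import structures.
From mathcomp Require Import all_boot all_order all_algebra.
From mathcomp Require Import all_classical all_reals all_analysis.
Set Implicit Arguments. Unset Strict Implicit. Unset Printing Implicit Defensive.
Import Order.TTheory GRing.Theory Num.Theory.
Import numFieldNormedType.Exports.
Local Open Scope ring_scope.

Section GTSAGA.
Variables (R : realType) (n m p : nat).

Definition dotv (u v : 'rV[R]_p) : R := \sum_(l < p) u 0 l * v 0 l.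
Definition sqnorm (v : 'rV[R]_p) : R := dotv v v.
Definition enorm (v : 'rV[R]_p) : R := Num.sqrt (sqnorm v).

(* one round of random draws: (tau^k_i)_i and (s^k_i)_i, each uniform on 'I_m *)
Definition draw := ({ffun 'I_n -> 'I_m} * {ffun 'I_n -> 'I_m})%type.
(* an outcome = the whole sequence of draws k = 0,1,2,... *)
Definition outcome := nat -> draw.

(* state at iteration k: x^k, y^k, g^{k-1}, z^k *)
Record state := State {
  st_x : 'I_n -> 'rV[R]_p;
  st_y : 'I_n -> 'rV[R]_p;
  st_gprev : 'I_n -> 'rV[R]_p;
  st_z : 'I_n -> 'I_m -> 'rV[R]_p }.

Variables (W : 'M[R]_n) (alpha : R) (gradf : 'I_n -> 'I_m -> 'rV[R]_p -> 'rV[R]_p)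
          (x0 : 'rV[R]_p).

Definition gradfi (i : 'I_n) (x : 'rV[R]_p) : 'rV[R]_p :=
  m%:R^-1 *: \sum_(j < m) gradf i j x.

Definition saga (st : state) (tau : {ffun 'I_n -> 'I_m}) (i : 'I_n) : 'rV[R]_p :=
  gradf i (tau i) (st_x st i) - gradf i (tau i) (st_z st i (tau i))
  + m%:R^-1 *: \sum_(j < m) gradf i j (st_z st i j).

Definition step (st : state) (d : draw) : state :=
  let g := saga st d.1 in
  let y' := fun i => \sum_(r < n) W i r *: (st_y st r + g r - st_gprev st r) in
  let x' := fun i => \sum_(r < n) W i r *: (st_x st r - alpha *: y' r) in
  let z' := fun i j => if j == d.2 i then st_x st i else st_z st i j in
  State x' y' g z'.

Definition init : state :=
  State (fun _ => x0) (fun _ => 0) (fun _ => 0) (fun _ _ => x0).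

Fixpoint traj (w : outcome) (k : nat) : state :=
  match k with 0 => init | k'.+1 => step (traj w k') (w k') end.

Definition xk w k := st_x (traj w k).
Definition yk w k := st_y (traj w k).
Definition zk w k := st_z (traj w k).
Definition gk w k := saga (traj w k) (w k).1.

Definition avg (v : 'I_n -> 'rV[R]_p) : 'rV[R]_p := n%:R^-1 *: \sum_(i < n) v i.
(* || v - J v ||^2 for a stacked vector v = (v_1,...,v_n) *)
Definition consensus_err (v : 'I_n -> 'rV[R]_p) : R :=
  \sum_(i < n) sqnorm (v i - avg v).
Definition stacked_sqdist (u v : 'I_n -> 'rV[R]_p) : R :=
  \sum_(i < n) sqnorm (u i - v i).

Definition tk w k : R :=
  n%:R^-1 * \sum_(i < n) (m%:R^-1 * \sum_(j < m) sqnorm (avg (xk w k) - zk w k i j)).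

(* ---- conditional expectation given F^k on the discrete product space ----
   The draws w 0, w 1, ... are i.i.d. uniform on the finite type [draw]
   (equivalently, all tau_i^k, s_i^k independent uniform on 'I_m).
   F^k is generated by w 0, ..., w (k-1).  For a random variable X that is
   F^(k+h)-measurable, i.e. depends only on w 0, ..., w (k+h-1),
   E[X | F^k](w) is the average of X over all values of the h draws
   w k, ..., w (k+h-1), the earlier draws being kept. *)
Definition splice (w : outcome) (k h : nat) (d : {ffun 'I_h -> draw}) : outcome :=
  fun t => if (k <= t)%N then
             match insub (t - k)%N : option 'I_h with
             | Some j => d j | None => w t end
           else w t.

Definition depends_upto (N : nat) (X : outcome -> R) : Prop :=
  forall w w' : outcome, (forall t, (t < N)%N -> w t = w' t) -> X w = X w'.

Definition condexp (k h : nat) (X : outcome -> R) (w : outcome) : R :=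
  (#|{: {ffun 'I_h -> draw}}|%:R)^-1 *
  \sum_(d : {ffun 'I_h -> draw}) X (splice w k d).

End GTSAGA.

Definition primitive_mx (R : realType) (n : nat) (A : 'M[R]_n) : Prop :=
  exists k : nat, forall i j, 0 < (A ^+ k) i j.

(* Main.v *)
Require Import Defs.
From HB Require Import structures.
From mathcomp Require Import all_boot all_order all_algebra.
From mathcomp Require Import all_classical all_reals all_analysis.
Import Order.TTheory GRing.Theory Num.Theory.
Import numFieldNormedType.Exports.
From mathcomp Require Import ring lra.
Local Open Scope ring_scope.


Section ExSec.
Context {R : realType}.

Definition Ex {T : finType} (F : T -> R) : R := (#|T|%:R)^-1 * \sum_(t : T) F t.

Lemma Ex_bij {T1 T2 : finType} (h : T1 -> T2) (F : T2 -> R) :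
  bijective h -> Ex (fun t => F (h t)) = Ex F.
Proof.
move=> bh; rewrite /Ex (@bij_eq_card _ _ h bh); congr (_ * _).
by rewrite (reindex h) //; apply: onW_bij.
Qed.

Lemma Ex_pair {T1 T2 : finType} (F : T1 * T2 -> R) :
  Ex F = Ex (fun a => Ex (fun b => F (a, b))).
Proof.
rewrite /Ex card_prod natrM invfM -mulrA; congr (_ * _).
rewrite -mulr_sumr; congr (_ * _).
rewrite pair_big /=; by apply: eq_bigr => -[].
Qed.

Lemma Ex_const {T : finType} (c : R) : (0 < #|T|)%N -> Ex (fun _ : T => c) = c.
Proof.
move=> h; rewrite /Ex sumr_const -[c *+ _]mulr_natr. rewrite (_ : #|xpredT| = #|T|) // mulrCA mulVf ?mulr1 //.
by rewrite pnatr_eq0 -lt0n.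
Qed.

Lemma Ex_le {T : finType} (F G : T -> R) : (forall t, F t <= G t) -> Ex F <= Ex G.
Proof.
move=> h; rewrite /Ex; apply: ler_wpM2l; first by rewrite invr_ge0.
by apply: ler_sum => t _.
Qed.

Lemma Ex_ge0 {T : finType} (F : T -> R) : (forall t, 0 <= F t) -> 0 <= Ex F.
Proof.
move=> h; rewrite /Ex; apply: mulr_ge0; first by rewrite invr_ge0.
by apply: sumr_ge0 => t _.
Qed.

Lemma Ex_add {T : finType} (F G : T -> R) : Ex (fun t => F t + G t) = Ex F + Ex G.
Proof. by rewrite /Ex big_split mulrDr. Qed.

Lemma Ex_scal {T : finType} (c : R) (F : T -> R) : Ex (fun t => c * F t) = c * Ex F.
Proof. by rewrite /Ex -mulr_sumr mulrCA. Qed.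

Lemma Ex_scalr {T : finType} (c : R) (F : T -> R) : Ex (fun t => F t * c) = Ex F * c.
Proof. rewrite mulrC -Ex_scal; congr Ex; apply: funext => t; exact: mulrC. Qed.

Lemma Ex_opp {T : finType} (F : T -> R) : Ex (fun t => - F t) = - Ex F.
Proof. by rewrite /Ex sumrN mulrN. Qed.

Lemma Ex_sum {T : finType} (I : finType) (F : I -> T -> R) :
  Ex (fun t => \sum_i F i t) = \sum_i Ex (F i).
Proof. by rewrite /Ex exchange_big mulr_sumr. Qed.

Lemma Ex_ext {T : finType} (F G : T -> R) : (forall t, F t = G t) -> Ex F = Ex G.
Proof. by move=> h; congr Ex; apply: funext. Qed.

Lemma Ex_var {T : finType} (F : T -> R) : (0 < #|T|)%N ->
  Ex (fun t => (F t - Ex F) ^+ 2) = Ex (fun t => F t ^+ 2) - Ex F ^+ 2.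
Proof.
move=> h; set mu := Ex F.
rewrite (@Ex_ext _ _ (fun t => F t ^+ 2 + ((- (2 * mu)) * F t + mu ^+ 2))); last first.
  by move=> t; ring.
by rewrite Ex_add Ex_add Ex_scal Ex_const // -/mu; ring.
Qed.

Lemma Ex_var_le {T : finType} (F : T -> R) : (0 < #|T|)%N ->
  Ex (fun t => (F t - Ex F) ^+ 2) <= Ex (fun t => F t ^+ 2).
Proof. by move=> h; rewrite Ex_var // lerBlDr lerDl sqr_ge0. Qed.

Definition upd {I J : finType} (t : {ffun I -> J}) (i : I) (j : J) : {ffun I -> J} :=
  [ffun r => if r == i then j else t r].

Lemma Ex_resample {I J : finType} (i : I) (F : {ffun I -> J} -> R) : (0 < #|J|)%N ->
  Ex F = Ex (fun t => Ex (fun j => F (upd t i j))).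
Proof.
move=> hJ.
pose h (q : {ffun I -> J} * J) := (upd q.1 i q.2, q.1 i).
have hh : cancel h h.
  move=> [t j]; rewrite /h /=; congr pair; last by rewrite /upd ffunE eqxx.
  by apply/ffunP => r; rewrite /upd !ffunE; case: eqP => [->|].
have bh : bijective h by exists h.
rewrite -(@Ex_pair _ _ (fun q => F (upd q.1 i q.2))).
rewrite -(@Ex_bij _ _ h (fun q => F (upd q.1 i q.2)) bh) /=.
rewrite (@Ex_ext _ _ (fun q => F q.1)); last by move=> q; congr F; exact: (congr1 fst (hh q)).
rewrite Ex_pair; apply: Ex_ext => t /=; by rewrite Ex_const.
Qed.

Lemma card_ffun_gt0 {I J : finType} : (0 < #|J|)%N -> (0 < #|{ffun I -> J}|)%N.
Proof. by move=> h; rewrite card_ffun expn_gt0 h. Qed.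

Lemma Ex_coord {I J : finType} (i : I) (g : J -> R) : (0 < #|J|)%N ->
  Ex (fun t : {ffun I -> J} => g (t i)) = Ex g.
Proof.
move=> hJ; rewrite (Ex_resample i) //.
rewrite (@Ex_ext _ _ (fun _ => Ex g)); first by rewrite Ex_const // card_ffun_gt0.
by move=> t; apply: Ex_ext => j; rewrite /upd ffunE eqxx.
Qed.

Lemma Ex_coord2 {I J : finType} (i r : I) (g1 g2 : J -> R) : (0 < #|J|)%N -> i != r ->
  Ex (fun t : {ffun I -> J} => g1 (t i) * g2 (t r)) = Ex g1 * Ex g2.
Proof.
move=> hJ hir; rewrite (Ex_resample i) //.
rewrite (@Ex_ext _ _ (fun t : {ffun I -> J} => Ex g1 * g2 (t r))).
  by rewrite Ex_scal Ex_coord.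
move=> t; rewrite -Ex_scalr; apply: Ex_ext => j.
by rewrite /upd !ffunE eqxx eq_sym (negbTE hir).
Qed.

Lemma Ex_indep {I J : finType} (h : I -> J -> R) : (0 < #|J|)%N ->
  Ex (fun t : {ffun I -> J} => (\sum_i h i (t i)) ^+ 2)
  = (\sum_i Ex (h i)) ^+ 2 + \sum_i Ex (fun j => (h i j - Ex (h i)) ^+ 2).
Proof.
move=> hJ.
rewrite (@Ex_ext _ _ (fun t : {ffun I -> J} => \sum_i \sum_r h i (t i) * h r (t r))); last first.
  by move=> t; rewrite expr2 mulr_suml; apply: eq_bigr => i _; rewrite mulr_sumr.
rewrite Ex_sum expr2 mulr_suml -big_split /=; apply: eq_bigr => i _.
rewrite Ex_sum mulr_sumr (bigD1 i) //= [in RHS](bigD1 i) //=.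
rewrite [X in _ = _ + X + _](eq_bigr (fun r => Ex (fun t : {ffun I -> J} => h i (t i) * h r (t r)))); last first.
  by move=> r hr; rewrite Ex_coord2 // eq_sym.
rewrite (Ex_coord i (fun j => h i j * h i j)) // Ex_var //.
rewrite (@Ex_ext _ (fun j => h i j ^+ 2) (fun j => h i j * h i j)); last by move=> j; rewrite expr2.
ring.
Qed.

Lemma wexpand {I : finType} (w a : I -> R) (mu : R) :
  \sum_r w r * (a r - mu) ^+ 2
  = \sum_r w r * a r ^+ 2 + (- (2 * mu)) * (\sum_r w r * a r) + mu ^+ 2 * \sum_r w r.
Proof. rewrite !mulr_sumr -!big_split /=; apply: eq_bigr => r _; ring. Qed.

Lemma jensen_sq {I : finType} (w a : I -> R) : (forall r, 0 <= w r) -> \sum_r w r = 1 ->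
  (\sum_r w r * a r) ^+ 2 <= \sum_r w r * a r ^+ 2.
Proof.
move=> w0 w1.
have := wexpand w a (\sum_r w r * a r).
have : 0 <= \sum_r w r * (a r - \sum_r w r * a r) ^+ 2.
  by apply: sumr_ge0 => r _; rewrite mulr_ge0 ?sqr_ge0.
rewrite w1 => h0 hE; rewrite hE mulr1 in h0; nra.
Qed.

End ExSec.


Section Model.
Variables (R : realType) (n m p : nat).
Variables (W : 'M[R]_n) (alpha L : R) (gradf : 'I_n -> 'I_m -> 'rV[R]_p -> 'rV[R]_p).
Hypothesis n_gt0 : (0 < n)%N.
Hypothesis m_gt0 : (0 < m)%N.
Hypothesis L_gt0 : 0 < L.
Hypothesis smooth : forall i j (x y : 'rV[R]_p),
     enorm (gradf i j x - gradf i j y) <= L * enorm (x - y).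

Lemma sqnorm_coord (v : 'rV[R]_p) : sqnorm v = \sum_l (v 0 l) ^+ 2.
Proof. by rewrite /sqnorm /dotv; apply: eq_bigr => l _; rewrite expr2. Qed.

Lemma sqnorm_ge0 (v : 'rV[R]_p) : 0 <= sqnorm v.
Proof. by rewrite sqnorm_coord; apply: sumr_ge0 => l _; apply: sqr_ge0. Qed.

Lemma sqnorm_tri (u v c : 'rV[R]_p) :
  sqnorm (u - v) <= 2 * sqnorm (u - c) + 2 * sqnorm (c - v).
Proof.
rewrite !sqnorm_coord !mulr_sumr -big_split /=; apply: ler_sum => l _.
rewrite !mxE. set a := u 0 l; set b := v 0 l; set d := c 0 l.
have := sqr_ge0 (a + b - 2 * d); nra.
Qed.

Lemma sqnorm_sym (u v : 'rV[R]_p) : sqnorm (u - v) = sqnorm (v - u).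
Proof. by rewrite -opprB /sqnorm /dotv; apply: eq_bigr => l _; rewrite !mxE mulrNN. Qed.

Lemma smooth_sq i j (x y : 'rV[R]_p) :
  sqnorm (gradf i j x - gradf i j y) <= L ^+ 2 * sqnorm (x - y).
Proof.
have h := smooth i j x y; move: h; rewrite /enorm.
have e1 := sqr_sqrtr (sqnorm_ge0 (gradf i j x - gradf i j y)).
have e2 := sqr_sqrtr (sqnorm_ge0 (x - y)).
have s1 := sqrtr_ge0 (sqnorm (gradf i j x - gradf i j y)).
have s2 := sqrtr_ge0 (sqnorm (x - y)).
move: e1 e2 s1 s2.
move: (Num.sqrt (sqnorm (gradf i j x - gradf i j y))) => a.
move: (Num.sqrt (sqnorm (x - y))) => b.
move=> <- <- ha hb hab; nra.
Qed.

Lemma Ex_ord (F : 'I_m -> R) : Ex F = m%:R^-1 * \sum_j F j.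
Proof. by rewrite /Ex card_ord. Qed.

Lemma card_ord_gt0 : (0 < #|'I_m|)%N.
Proof. by rewrite card_ord. Qed.

Definition sagaj (st : state R n m p) (i : 'I_n) (j : 'I_m) : 'rV[R]_p :=
  gradf i j (st_x st i) - gradf i j (st_z st i j)
  + m%:R^-1 *: \sum_(j' < m) gradf i j' (st_z st i j').

Lemma saga_j st tau i : saga gradf st tau i = sagaj st i (tau i).
Proof. by []. Qed.

Lemma m_neq0 : (m%:R : R) != 0.
Proof. by rewrite pnatr_eq0 -lt0n. Qed.

Lemma sagaj_coord st i j l : sagaj st i j 0 l =
  gradf i j (st_x st i) 0 l - gradf i j (st_z st i j) 0 l
  + Ex (fun j' => gradf i j' (st_z st i j') 0 l).
Proof. by rewrite /sagaj !mxE summxE Ex_ord. Qed.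

Lemma gradfi_coord i x l : gradfi gradf i x 0 l = Ex (fun j => gradf i j x 0 l).
Proof. by rewrite /gradfi mxE summxE Ex_ord. Qed.

Lemma sagaj_mean st i l :
  Ex (fun j => sagaj st i j 0 l) = gradfi gradf i (st_x st i) 0 l.
Proof.
rewrite (@Ex_ext _ _ _ (fun j => (gradf i j (st_x st i) 0 l + - gradf i j (st_z st i j) 0 l)
  + Ex (fun j' => gradf i j' (st_z st i j') 0 l))); last by move=> j; rewrite sagaj_coord.
rewrite !Ex_add Ex_opp Ex_const ?card_ord_gt0 // gradfi_coord; ring.
Qed.

Lemma var_node st i :
  Ex (fun j => sqnorm (sagaj st i j - gradfi gradf i (st_x st i)))
  <= L ^+ 2 * Ex (fun j => sqnorm (st_x st i - st_z st i j)).
Proof.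
pose Xd j := gradf i j (st_x st i) - gradf i j (st_z st i j).
apply: (@le_trans _ _ (Ex (fun j => sqnorm (Xd j)))); last first.
  rewrite -Ex_scal; apply: Ex_le => j; exact: smooth_sq.
rewrite (@Ex_ext _ _ _ (fun j => \sum_l (Xd j 0 l - Ex (fun j' => Xd j' 0 l)) ^+ 2)); last first.
  move=> j; rewrite sqnorm_coord; apply: eq_bigr => l _; congr (_ ^+ 2).
  have hX : forall j', Xd j' 0 l = gradf i j' (st_x st i) 0 l + - gradf i j' (st_z st i j') 0 l.
    by move=> j'; rewrite /Xd !mxE.
  rewrite [LHS]mxE [X in _ + X = _]mxE sagaj_coord gradfi_coord hX (Ex_ext _ _ hX) Ex_add Ex_opp; ring.
rewrite Ex_sum (@Ex_ext _ _ _ (fun j => \sum_l (Xd j 0 l) ^+ 2)); last by move=> j; rewrite sqnorm_coord.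
rewrite Ex_sum; apply: ler_sum => l _; apply: Ex_var_le; exact: card_ord_gt0.
Qed.

End Model.
Arguments sagaj {R n m p} gradf st i j.
Arguments sqnorm_ge0 {R p} v.
Arguments sqnorm_tri {R p} u v c.
Arguments sqnorm_sym {R p} u v.
Arguments sqnorm_coord {R p} v.


Section Geom.
Variables (R : realType) (n : nat) (W : 'M[R]_n) (alpha : R).
Hypothesis n_gt0 : (0 < n)%N.
Hypothesis W_ge0 : forall i j, 0 <= W i j.
Hypothesis W_row : forall i, \sum_(r < n) W i r = 1.
Hypothesis W_col : forall r, \sum_(i < n) W i r = 1.

Lemma n_neq0 : (n%:R : R) != 0.
Proof. by rewrite pnatr_eq0 -lt0n. Qed.

Lemma stack_jensen (A : 'I_n -> R) :
  \sum_i (\sum_r W i r * A r) ^+ 2 <= \sum_r A r ^+ 2.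
Proof.
apply: (@le_trans _ _ (\sum_i \sum_r W i r * A r ^+ 2)).
  by apply: ler_sum => i _; apply: jensen_sq.
rewrite exchange_big /=; apply: ler_sum => r _; by rewrite -mulr_suml W_col mul1r.
Qed.

Lemma stack_sum (A : 'I_n -> R) : \sum_i \sum_r W i r * A r = \sum_r A r.
Proof. by rewrite exchange_big /=; apply: eq_bigr => r _; rewrite -mulr_suml W_col mul1r. Qed.

Lemma dev_sum0 (x : 'I_n -> R) : \sum_r (x r - n%:R^-1 * \sum_r' x r') = 0.
Proof.
rewrite sumrB sumr_const card_ord -mulrnAr -(mulr_natl (\sum_r' x r') n) mulrA mulVf ?n_neq0 // mul1r.
by rewrite subrr.
Qed.

Lemma geom_scalar (x y : 'I_n -> R) :
  \sum_i (\sum_r W i r * (x r - alpha * y r) - n%:R^-1 * \sum_r x r) ^+ 2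
  <= 2 * \sum_r (x r - n%:R^-1 * \sum_r' x r') ^+ 2
     + 2 * alpha ^+ 2 * \sum_r (y r - n%:R^-1 * \sum_r' y r') ^+ 2
     + 2 * alpha ^+ 2 * n%:R * (n%:R^-1 * \sum_r y r) ^+ 2.
Proof.
set xb := n%:R^-1 * \sum_r x r; set yb := n%:R^-1 * \sum_r y r.
pose U i := \sum_r W i r * (x r - xb).
pose V i := \sum_r W i r * (y r - yb).
have eqi : forall i, \sum_r W i r * (x r - alpha * y r) - xb
                     = U i - alpha * V i - alpha * yb.
  move=> i.
  rewrite (eq_bigr (fun r => W i r * (x r - xb) + (- alpha) * (W i r * (y r - yb))
                             + W i r * (xb - alpha * yb))); last by move=> r _; ring.
  rewrite !big_split /= -mulr_sumr -mulr_suml W_row /U /V; ring.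
have h1 : \sum_i (\sum_r W i r * (x r - alpha * y r) - xb) ^+ 2
          <= \sum_i (2 * alpha ^+ 2 * V i ^+ 2 + 2 * (U i - alpha * yb) ^+ 2).
  apply: ler_sum => i _; rewrite eqi.
  have := sqr_ge0 (U i - alpha * yb + alpha * V i); nra.
have h2 : \sum_i (U i - alpha * yb) ^+ 2
          = \sum_i U i ^+ 2 + (- (2 * alpha * yb)) * \sum_i U i + (alpha * yb) ^+ 2 * n%:R.
  rewrite (eq_bigr (fun i => U i ^+ 2 + (- (2 * alpha * yb)) * U i + (alpha * yb) ^+ 2)); last first.
    by move=> i _; ring.
  by rewrite !big_split /= -mulr_sumr sumr_const card_ord mulr_natr.
have hU0 : \sum_i U i = 0 by rewrite /U stack_sum dev_sum0.
have hU : \sum_i U i ^+ 2 <= \sum_r (x r - xb) ^+ 2 by apply: stack_jensen.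
have hV : \sum_i V i ^+ 2 <= \sum_r (y r - yb) ^+ 2 by apply: stack_jensen.
rewrite big_split /= -!mulr_sumr in h1.
rewrite h2 hU0 in h1.
have a2 := sqr_ge0 alpha.
nra.
Qed.

Variable p : nat.

Lemma avg_coord (v : 'I_n -> 'rV[R]_p) l : avg v 0 l = n%:R^-1 * \sum_r v r 0 l.
Proof. by rewrite /avg mxE summxE. Qed.

Lemma cons_coord (v : 'I_n -> 'rV[R]_p) :
  consensus_err v = \sum_l \sum_i (v i 0 l - n%:R^-1 * \sum_r v r 0 l) ^+ 2.
Proof.
rewrite /consensus_err exchange_big /=; apply: eq_bigr => i _.
apply: eq_bigr => r _; by rewrite !mxE summxE expr2.
Qed.

Lemma geom_vec (x y : 'I_n -> 'rV[R]_p) :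
  \sum_i sqnorm (\sum_r W i r *: (x r - alpha *: y r) - avg x)
  <= 2 * consensus_err x + 2 * alpha ^+ 2 * consensus_err y
     + 2 * alpha ^+ 2 * n%:R * sqnorm (avg y).
Proof.
rewrite !cons_coord [sqnorm (avg y)]sqnorm_coord !mulr_sumr -!big_split /=.
rewrite (eq_bigr (fun i => \sum_l (\sum_r W i r * (x r 0 l - alpha * y r 0 l)
                                   - n%:R^-1 * \sum_r x r 0 l) ^+ 2)); last first.
  move=> i _; rewrite sqnorm_coord; apply: eq_bigr => l _.
  rewrite mxE summxE [X in _ + X]mxE avg_coord; congr ((_ - _) ^+ 2).
  by apply: eq_bigr => r _; rewrite !mxE.
rewrite exchange_big /=; apply: ler_sum => l _.
rewrite avg_coord; exact: geom_scalar.
Qed.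

End Geom.


Section Model2.
Variables (R : realType) (n m p : nat).
Variables (W : 'M[R]_n) (alpha L : R) (gradf : 'I_n -> 'I_m -> 'rV[R]_p -> 'rV[R]_p).
Hypothesis n_gt0 : (0 < n)%N.
Hypothesis m_gt0 : (0 < m)%N.
Hypothesis W_col : forall r, \sum_(i < n) W i r = 1.

Lemma avg_W (v : 'I_n -> 'rV[R]_p) : avg (fun i => \sum_r W i r *: v r) = avg v.
Proof.
rewrite /avg; congr (_ *: _); rewrite exchange_big /=; apply: eq_bigr => r _.
by rewrite -scaler_suml W_col scale1r.
Qed.

Lemma avg_lin (a b c : 'I_n -> 'rV[R]_p) :
  avg (fun i => a i + b i - c i) = avg a + avg b - avg c.
Proof. by rewrite /avg sumrB big_split /= scalerBr scalerDr. Qed.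

Lemma track_step (st : state R n m p) d :
  avg (st_y st) = avg (st_gprev st) ->
  avg (st_y (step W alpha gradf st d)) = avg (saga gradf st d.1).
Proof.
move=> h /=; rewrite (avg_W (fun r => st_y st r + saga gradf st d.1 r - st_gprev st r)).
by rewrite avg_lin h addrC addKr.
Qed.

Lemma track_traj x0 w k :
  avg (st_y (traj W alpha gradf x0 w k)) = avg (st_gprev (traj W alpha gradf x0 w k)).
Proof.
elim: k => [//|k IH] /=; exact: track_step.
Qed.

Lemma indep_avg (st : state R n m p) :
  Ex (fun tau : {ffun 'I_n -> 'I_m} => sqnorm (avg (saga gradf st tau)))
  = sqnorm (avg (fun i => gradfi gradf i (st_x st i)))
    + (n%:R^-1) ^+ 2 * \sum_i Ex (fun j => sqnorm (sagaj gradf st i j - gradfi gradf i (st_x st i))).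
Proof.
rewrite (@Ex_ext _ _ _ (fun tau : {ffun 'I_n -> 'I_m} => \sum_l (n%:R^-1) ^+ 2 * (\sum_i sagaj gradf st i (tau i) 0 l) ^+ 2)); last first.
  by move=> tau; rewrite sqnorm_coord; apply: eq_bigr => l _; rewrite avg_coord exprMn.
rewrite Ex_sum sqnorm_coord.
rewrite (eq_bigr (fun i => \sum_l Ex (fun j => (sagaj gradf st i j 0 l - gradfi gradf i (st_x st i) 0 l) ^+ 2))); last first.
  move=> i _; rewrite -Ex_sum; apply: Ex_ext => j; rewrite sqnorm_coord.
  by apply: eq_bigr => l _; rewrite mxE [X in _ + X]mxE.
rewrite exchange_big /= mulr_sumr -big_split /=; apply: eq_bigr => l _.
rewrite Ex_scal (Ex_indep (fun i j => sagaj gradf st i j 0 l)) ?card_ord_gt0 //.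
rewrite [X in _ * (X ^+ 2 + _) = _](eq_bigr (fun i => gradfi gradf i (st_x st i) 0 l)); last first.
  by move=> i _; apply: sagaj_mean.
rewrite [X in _ * (_ + X) = _](eq_bigr (fun i => Ex (fun j => (sagaj gradf st i j 0 l - gradfi gradf i (st_x st i) 0 l) ^+ 2))); last first.
  by move=> i _; rewrite sagaj_mean.
by rewrite avg_coord exprMn mulrDr.
Qed.

Lemma minv_le1 : (m%:R : R)^-1 <= 1.
Proof. by rewrite invf_le1 ?ler1n ?ltr0n. Qed.

Lemma minv_ge0 : 0 <= (m%:R : R)^-1.
Proof. by rewrite invr_ge0 ler0n. Qed.

Lemma zbound (x' x : 'I_n -> 'rV[R]_p) (z : 'I_n -> 'I_m -> 'rV[R]_p) (s : {ffun 'I_n -> 'I_m}) :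
  \sum_i Ex (fun j => sqnorm (x' i - (if j == s i then x i else z i j)))
  <= 2 * \sum_i sqnorm (x' i - avg x) + 2 * consensus_err x
     + 2 * \sum_i Ex (fun j => sqnorm (avg x - z i j)).
Proof.
rewrite /consensus_err !mulr_sumr -!big_split /=; apply: ler_sum => i _.
set xb := avg x.
apply: (@le_trans _ _ (Ex (fun j => 2 * sqnorm (x' i - xb)
            + 2 * sqnorm (xb - (if j == s i then x i else z i j))))).
  by apply: Ex_le => j; apply: sqnorm_tri.
rewrite Ex_add Ex_const ?card_ord // Ex_scal -addrA lerD2l -mulrDr ler_wpM2l //.
rewrite !Ex_ord.
have h1 : \sum_j sqnorm (xb - (if j == s i then x i else z i j))
          <= sqnorm (xb - x i) + \sum_j sqnorm (xb - z i j).
  rewrite (bigD1 (s i)) //= eqxx lerD2l [X in _ <= X](bigD1 (s i)) //=.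
  rewrite (eq_bigr (fun j => sqnorm (xb - z i j))); last by move=> j /negbTE ->.
  by rewrite lerDr sqnorm_ge0.
rewrite sqnorm_sym.
have hA := sqnorm_ge0 (xb - x i).
have hS : 0 <= \sum_j sqnorm (xb - z i j) by apply: sumr_ge0 => j _; apply: sqnorm_ge0.
have := minv_le1; have := minv_ge0.
move: h1 hA hS; move: (\sum_j sqnorm (xb - (if j == s i then x i else z i j))) => T1.
move: (\sum_j sqnorm (xb - z i j)) => T2; move: (sqnorm (xb - x i)) => A.
move: ((m%:R : R)^-1) => c.
move=> h1 hA hS hc0 hc1; nra.
Qed.

Lemma Sbound (x : 'I_n -> 'rV[R]_p) (z : 'I_n -> 'I_m -> 'rV[R]_p) :
  \sum_i Ex (fun j => sqnorm (x i - z i j))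
  <= 2 * consensus_err x + 2 * \sum_i Ex (fun j => sqnorm (avg x - z i j)).
Proof.
rewrite /consensus_err !mulr_sumr -!big_split /=; apply: ler_sum => i _.
apply: (@le_trans _ _ (Ex (fun j => 2 * sqnorm (x i - avg x) + 2 * sqnorm (avg x - z i j)))).
  by apply: Ex_le => j; apply: sqnorm_tri.
by rewrite Ex_add Ex_const ?card_ord // Ex_scal.
Qed.

End Model2.


Section Main.
Variables (R : realType) (n m p : nat).
Variables (W : 'M[R]_n) (alpha L : R) (gradf : 'I_n -> 'I_m -> 'rV[R]_p -> 'rV[R]_p).
Hypothesis n_gt0 : (0 < n)%N.
Hypothesis m_gt0 : (0 < m)%N.
Hypothesis L_gt0 : 0 < L.
Hypothesis smooth : forall i j (x y : 'rV[R]_p),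
     enorm (gradf i j x - gradf i j y) <= L * enorm (x - y).
Hypothesis W_ge0 : forall i j, 0 <= W i j.
Hypothesis W_row : forall i, \sum_(r < n) W i r = 1.
Hypothesis W_col : forall r, \sum_(i < n) W i r = 1.
Hypothesis H8 : 8 * (alpha ^+ 2 * L ^+ 2) <= n%:R.

Lemma step_bound (st : state R n m p) (d0 : draw n m) :
  avg (st_y st) = avg (st_gprev st) ->
  Ex (fun d1 : draw n m =>
     stacked_sqdist (saga gradf (step W alpha gradf st d0) d1.1)
       (fun i => gradfi gradf i (st_x (step W alpha gradf st d0) i)))
  <= L ^+ 2 * (6 * consensus_err (st_x st)
               + 2 * \sum_i Ex (fun j => sqnorm (avg (st_x st) - st_z st i j)))
     + 4 * alpha ^+ 2 * L ^+ 2 * consensus_err (st_y (step W alpha gradf st d0))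
     + 4 * alpha ^+ 2 * n%:R * L ^+ 2 * sqnorm (avg (saga gradf st d0.1)).
Proof.
move=> htr.
set st' := step W alpha gradf st d0.
rewrite Ex_pair.
rewrite (@Ex_ext _ _ _ (fun tau : {ffun 'I_n -> 'I_m} =>
   \sum_i sqnorm (sagaj gradf st' i (tau i) - gradfi gradf i (st_x st' i)))); last first.
  move=> tau /=; rewrite (@Ex_const _ {ffun 'I_n -> 'I_m}) ?card_ffun_gt0 ?card_ord //.
rewrite Ex_sum.
apply: (@le_trans _ _ (L ^+ 2 * \sum_i Ex (fun j => sqnorm (st_x st' i - st_z st' i j)))).
  rewrite mulr_sumr; apply: ler_sum => i _.
  rewrite (Ex_coord i (fun j => sqnorm (sagaj gradf st' i j - gradfi gradf i (st_x st' i)))) ?card_ord //.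
  exact: var_node.
have hz : \sum_i Ex (fun j => sqnorm (st_x st' i - st_z st' i j))
  <= 2 * \sum_i sqnorm (st_x st' i - avg (st_x st)) + 2 * consensus_err (st_x st)
     + 2 * \sum_i Ex (fun j => sqnorm (avg (st_x st) - st_z st i j))
  := zbound R n m p m_gt0 (st_x st') (st_x st) (st_z st) d0.2.
have hg : \sum_i sqnorm (st_x st' i - avg (st_x st)) <=
  2 * consensus_err (st_x st) + 2 * alpha ^+ 2 * consensus_err (st_y st') +
  2 * alpha ^+ 2 * n%:R * sqnorm (avg (st_y st'))
  := geom_vec R n W alpha n_gt0 W_ge0 W_row W_col p (st_x st) (st_y st').
have ht := track_step R n m p W alpha gradf W_col st d0 htr.
rewrite -/st' in ht.
rewrite ht in hg.
have hL := sqr_ge0 L.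
move: hz hg hL.
move: (\sum_i Ex (fun j => sqnorm (st_x st' i - st_z st' i j))) => A.
move: (\sum_i sqnorm (st_x st' i - avg (st_x st))) => B.
move: (\sum_i Ex (fun j => sqnorm (avg (st_x st) - st_z st i j))) => T.
move: (consensus_err (st_x st)) => a2.
move: (consensus_err (st_y st')) => b.
move: (sqnorm (avg (saga gradf st d0.1))) => g.
move: (L ^+ 2) => L2 hz hg hL.
nra.
Qed.

Lemma draw_card : (0 < #|{: {ffun 'I_n -> 'I_m} * {ffun 'I_n -> 'I_m}}|)%N.
Proof. by rewrite card_prod muln_gt0 !card_ffun_gt0 ?card_ord. Qed.

Lemma n_inv_ge0 : 0 <= (n%:R : R)^-1.
Proof. by rewrite invr_ge0 ler0n. Qed.

Lemma consensus_err_ge0 (v : 'I_n -> 'rV[R]_p) : 0 <= consensus_err v.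
Proof. by apply: sumr_ge0 => i _; apply: sqnorm_ge0. Qed.

Lemma main_state (st : state R n m p) :
  avg (st_y st) = avg (st_gprev st) ->
  Ex (fun d0 : draw n m => Ex (fun d1 : draw n m =>
     stacked_sqdist (saga gradf (step W alpha gradf st d0) d1.1)
       (fun i => gradfi gradf i (st_x (step W alpha gradf st d0) i))))
  <= 7 * L ^+ 2 * consensus_err (st_x st)
     + 3 * L ^+ 2 * (\sum_i Ex (fun j => sqnorm (avg (st_x st) - st_z st i j)))
     + 4 * n%:R * alpha ^+ 2 * L ^+ 2 * sqnorm (avg (fun i => gradfi gradf i (st_x st i)))
     + 4 * alpha ^+ 2 * L ^+ 2 * Ex (fun d0 : draw n m => consensus_err (st_y (step W alpha gradf st d0))).
Proof.
move=> htr.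
apply: le_trans (Ex_le _ _ (fun d0 => step_bound st d0 htr)) _.
rewrite !Ex_add Ex_const ?draw_card // !Ex_scal.
have hg : Ex (fun d0 : draw n m => sqnorm (avg (saga gradf st d0.1)))
   <= sqnorm (avg (fun i => gradfi gradf i (st_x st i)))
      + (n%:R^-1) ^+ 2 * (L ^+ 2 * (2 * consensus_err (st_x st)
               + 2 * \sum_i Ex (fun j => sqnorm (avg (st_x st) - st_z st i j)))).
  rewrite Ex_pair.
  rewrite (@Ex_ext _ _ _ (fun tau : {ffun 'I_n -> 'I_m} => sqnorm (avg (saga gradf st tau)))); last first.
    by move=> tau /=; rewrite (@Ex_const _ {ffun 'I_n -> 'I_m}) ?card_ffun_gt0 ?card_ord.
  rewrite indep_avg // lerD2l; apply: ler_wpM2l; first by rewrite sqr_ge0.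
  apply: (@le_trans _ _ (L ^+ 2 * \sum_i Ex (fun j => sqnorm (st_x st i - st_z st i j)))).
    by rewrite mulr_sumr; apply: ler_sum => i _; apply: var_node.
  by apply: ler_wpM2l; [exact: sqr_ge0 | exact: Sbound].
have ha := consensus_err_ge0 (st_x st).
have hT : 0 <= \sum_i Ex (fun j => sqnorm (avg (st_x st) - st_z st i j)).
  by apply: sumr_ge0 => i _; apply: Ex_ge0 => j; apply: sqnorm_ge0.
have hn : (n%:R : R) * n%:R^-1 = 1 by rewrite mulfV // n_neq0.
have hn0 := n_inv_ge0.
have hL := sqr_ge0 L; have ha2 := sqr_ge0 alpha.
have hN : 0 <= (n%:R : R) by rewrite ler0n.
move: hg ha hT hn hn0 hL ha2 H8 hN.
move: (Ex (fun d0 : draw n m => sqnorm (avg (saga gradf st d0.1)))) => g.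
move: (Ex (fun d0 : draw n m => consensus_err (st_y (step W alpha gradf st d0)))) => b.
move: (sqnorm (avg (fun i => gradfi gradf i (st_x st i)))) => G.
move: (\sum_i Ex (fun j => sqnorm (avg (st_x st) - st_z st i j))) => T.
move: (consensus_err (st_x st)) => a.
move: (n%:R^-1 : R) => ni; move: (n%:R : R) => N.
move: (L ^+ 2) => L2; move: (alpha ^+ 2) => a2.
move=> hg ha hT hn hn0 hL ha2 H8' hN.
have key : 4 * a2 * N * L2 * (ni ^+ 2 * (L2 * (2 * a + 2 * T))) <= L2 * (a + T).
  have -> : 4 * a2 * N * L2 * (ni ^+ 2 * (L2 * (2 * a + 2 * T)))
          = (8 * (a2 * L2)) * ni * (N * ni) * (L2 * (a + T)) by ring.
  rewrite hn mulr1.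
  have hY : 0 <= L2 * (a + T) by apply: mulr_ge0 => //; lra.
  have hc : 8 * (a2 * L2) * ni <= 1.
    have : 8 * (a2 * L2) * ni <= N * ni by apply: ler_wpM2r.
    by rewrite hn.
  have hc0 : 0 <= 8 * (a2 * L2) * ni by apply: mulr_ge0 => //; apply: mulr_ge0 => //; apply: mulr_ge0.
  nra.
have hag : 0 <= 4 * a2 * N * L2.
  apply: mulr_ge0 => //; apply: mulr_ge0 => //; apply: mulr_ge0 => //.
nra.
Qed.

End Main.


Lemma traj_dep (R : realType) (n m p : nat) (W : 'M[R]_n) (alpha : R)
  (gradf : 'I_n -> 'I_m -> 'rV[R]_p -> 'rV[R]_p) (x0 : 'rV[R]_p) (w w' : outcome n m) k :
  (forall t, (t < k)%N -> w t = w' t) ->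
  traj W alpha gradf x0 w k = traj W alpha gradf x0 w' k.
Proof.
elim: k => [//|k IH] h /=.
rewrite IH ?h // => t ht; apply: h; exact: ltnW.
Qed.

Lemma splice_lt (n m : nat) (w : outcome n m) k h (d : {ffun 'I_h -> draw n m}) t :
  (t < k)%N -> splice w k d t = w t.
Proof. by move=> ht; rewrite /splice leqNgt ht. Qed.

Lemma splice_at (n m : nat) (w : outcome n m) k h (d : {ffun 'I_h -> draw n m}) (i : 'I_h) :
  splice w k d (k + i)%N = d i.
Proof.
rewrite /splice leq_addr addKn.
case: insubP => [j _ hj|]; last by rewrite ltn_ord.
by congr (d _); apply: val_inj.
Qed.

Lemma splice_at0 (n m : nat) (w : outcome n m) k (d : {ffun 'I_2 -> draw n m}) :
  splice w k d k = d ord0.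
Proof. by have := splice_at n m w k 2 d ord0; rewrite addn0. Qed.

Lemma splice_at1 (n m : nat) (w : outcome n m) k (d : {ffun 'I_2 -> draw n m}) :
  splice w k d k.+1 = d ord_max.
Proof. by have := splice_at n m w k 2 d ord_max; rewrite addn1. Qed.

Lemma condexp_Ex (R : realType) (n m : nat) k (X : outcome n m -> R) w :
  condexp k 2 X w =
  Ex (fun d0 : draw n m => Ex (fun d1 : draw n m =>
     X (splice w k [ffun i : 'I_2 => if i == ord0 then d0 else d1]))).
Proof.
pose h (q : draw n m * draw n m) : {ffun 'I_2 -> draw n m} :=
  [ffun i : 'I_2 => if i == ord0 then q.1 else q.2].
have bh : bijective h.
  exists (fun f : {ffun 'I_2 -> draw n m} => (f ord0, f ord_max)).
    by move=> [a b]; rewrite /h !ffunE.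
  move=> f; apply/ffunP => i; rewrite /h ffunE /=.
  have [->|->] : i = ord0 \/ i = ord_max.
    by case: i => [[|[|kk]] hk]; [left | right | by []]; apply: val_inj.
    by rewrite eqxx.
  by [].
rewrite -(@Ex_pair _ _ _ (fun q => X (splice w k (h q)))).
rewrite (@Ex_bij _ _ _ h (fun d => X (splice w k d)) bh).
by [].
Qed.

Theorem lemma6 (R : realType) (n m p : nat)
  (f : 'I_n -> 'I_m -> 'rV[R]_p -> R)
  (gradf : 'I_n -> 'I_m -> 'rV[R]_p -> 'rV[R]_p)
  (L : R) (W : 'M[R]_n) (x0 : 'rV[R]_p) (alpha : R) :
  (0 < n)%N -> (0 < m)%N -> (0 < p)%N ->
  (* f_{i,j} differentiable with gradient gradf i j *)
  (forall i j (x : 'rV[R]_p), differentiable (f i j) x /\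
     forall h : 'rV[R]_p, 'd (f i j) x h = dotv (gradf i j x) h) ->
  (* L-smoothness *)
  0 < L ->
  (forall i j (x y : 'rV[R]_p),
     enorm (gradf i j x - gradf i j y) <= L * enorm (x - y)) ->
  (* F bounded below *)
  (exists c : R, forall x : 'rV[R]_p,
     c <= n%:R^-1 * \sum_(i < n) (m%:R^-1 * \sum_(j < m) f i j x)) ->
  (* W nonnegative, primitive, doubly stochastic *)
  (forall i j, 0 <= W i j) -> primitive_mx W ->
  (forall i, \sum_(r < n) W i r = 1) -> (forall r, \sum_(i < n) W i r = 1) ->
  (* step size *)
  0 < alpha -> alpha <= Num.sqrt n%:R / (Num.sqrt (8 * m%:R) * L) ->
  forall (k : nat) (w : outcome n m),
    condexp k 2
      (fun w' => stacked_sqdist (gk W alpha gradf x0 w' k.+1)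
                   (fun i => gradfi gradf i (xk W alpha gradf x0 w' k.+1 i))) w
    <= 85 / 10 * L ^+ 2 * consensus_err (xk W alpha gradf x0 w k)
       + 4 * n%:R * L ^+ 2 * tk W alpha gradf x0 w k
       + 6 * n%:R * alpha ^+ 2 * L ^+ 2
           * sqnorm (avg (fun i => gradfi gradf i (xk W alpha gradf x0 w k i)))
       + 4 * alpha ^+ 2 * L ^+ 2
           * condexp k 2 (fun w' => consensus_err (yk W alpha gradf x0 w' k.+1)) w.
Proof.
move=> hn hm hp hdiff hL hsm hbdd hW0 hprim hrow hcol ha0 hale k w.
have H8 : 8 * (alpha ^+ 2 * L ^+ 2) <= n%:R.
  have hs2 : 0 < Num.sqrt (8 * m%:R : R) by rewrite sqrtr_gt0 mulr_gt0 // ltr0n.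
  have hsL : 0 < Num.sqrt (8 * m%:R : R) * L by rewrite mulr_gt0.
  move: hale; rewrite ler_pdivlMr // => h1.
  have h2 : (alpha * (Num.sqrt (8 * m%:R) * L)) ^+ 2 <= Num.sqrt (n%:R) ^+ 2.
    have hx0 : 0 <= alpha * (Num.sqrt (8 * m%:R) * L) by rewrite mulr_ge0 // ltW.
    move: h1 hx0; move: (alpha * (Num.sqrt (8 * m%:R) * L)) (Num.sqrt (n%:R : R)) => x s h1 hx0.
    nra.
  rewrite sqr_sqrtr ?ler0n // !exprMn sqr_sqrtr in h2; last by rewrite mulr_ge0 ?ler0n.
  have hm1 : (1 : R) <= m%:R by rewrite ler1n.
  have := sqr_ge0 alpha; have := sqr_ge0 L.
  move: h2 hm1; move: (alpha ^+ 2) (L ^+ 2) (m%:R : R) (n%:R : R) => a2 l2 M N.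
  move=> h2 hm1 hl2 ha2; have hal : 0 <= a2 * l2 by apply: mulr_ge0.
  nra.
set st := traj W alpha gradf x0 w k.
have htr := track_traj R n m p W alpha gradf hcol x0 w k.
rewrite -/st in htr.
rewrite !condexp_Ex.
have E : forall d0 d1 : draw n m,
   let w' := splice w k [ffun i : 'I_2 => if i == ord0 then d0 else d1] in
   traj W alpha gradf x0 w' k = st /\ w' k = d0 /\ w' k.+1 = d1.
  move=> d0 d1 w'; split; last split.
  - by apply: traj_dep => t ht; rewrite /w' splice_lt.
  - by rewrite /w' splice_at0 ffunE.
  - by rewrite /w' splice_at1 ffunE.
rewrite (@Ex_ext _ _ _ (fun d0 : draw n m => Ex (fun d1 : draw n m =>
     stacked_sqdist (saga gradf (step W alpha gradf st d0) d1.1)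
       (fun i => gradfi gradf i (st_x (step W alpha gradf st d0) i))))); last first.
  move=> d0; apply: Ex_ext => d1; have [e1 [e2 e3]] := E d0 d1.
  by rewrite /gk /xk /= e1 e2 e3.
rewrite [X in _ <= _ + _ * X](@Ex_ext _ _ _ (fun d0 : draw n m => Ex (fun d1 : draw n m =>
     consensus_err (st_y (step W alpha gradf st d0))))); last first.
  move=> d0; apply: Ex_ext => d1; have [e1 [e2 e3]] := E d0 d1.
  by rewrite /yk /= e1 e2.
rewrite [X in _ <= _ + _ * X](@Ex_ext _ _ _ (fun d0 : draw n m => consensus_err (st_y (step W alpha gradf st d0)))); last first.
  by move=> d0; rewrite Ex_const ?draw_card.
apply: le_trans (main_state R n m p W alpha L gradf hn hm hsm hW0 hrow hcol H8 st htr) _.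
have hT : \sum_i Ex (fun j => sqnorm (avg (st_x st) - st_z st i j)) = n%:R * tk W alpha gradf x0 w k.
  rewrite /tk mulrA mulfV ?mul1r ?n_neq0 //; apply: eq_bigr => i _; by rewrite Ex_ord.
rewrite hT.
have ha : 0 <= consensus_err (xk W alpha gradf x0 w k) by apply: consensus_err_ge0.
have ht : 0 <= tk W alpha gradf x0 w k.
  rewrite /tk; apply: mulr_ge0; first by rewrite invr_ge0 ler0n.
  apply: sumr_ge0 => i _; apply: mulr_ge0; first by rewrite invr_ge0 ler0n.
  by apply: sumr_ge0 => j _; apply: sqnorm_ge0.
have hG := sqnorm_ge0 (avg (fun i => gradfi gradf i (xk W alpha gradf x0 w k i))).
have hN : (0 : R) <= n%:R by rewrite ler0n.
rewrite /xk -/st in ha ht hG *.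
move: ha ht hG hN.
move: (consensus_err (st_x st)) (tk W alpha gradf x0 w k)
      (sqnorm (avg (fun i => gradfi gradf i (st_x st i)))) (n%:R : R) => a t G N.
move: (Ex (fun d0 : draw n m => consensus_err (st_y (step W alpha gradf st d0)))) => B.
have := sqr_ge0 L; have := sqr_ge0 alpha.
move: (L ^+ 2) (alpha ^+ 2) => L2 a2 hl ha2 ha ht hG hN.
have h1 : 0 <= L2 * a by apply: mulr_ge0.
have h2 : 0 <= N * L2 * t by rewrite mulr_ge0 // mulr_ge0.
have h3 : 0 <= N * a2 * L2 * G by rewrite !mulr_ge0.
nra.
Qed.
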